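(* In the setting below, assume $\|\nabla f_i(x)\|\le G_i$ for all $x$ and $i$. For arbitrary permutations $\sigma_k$ and any $\eta>0$, there is an absolute constant $C>0$ such that: (i) with $\eta_k=\frac{\eta}{\sqrt k}$ for $k\in[K]$, $F(x_{K+1})-F_*\le C\left(\frac{D^2}{n\eta}+n\eta\bar G^2(1+\log K)\right)\frac1{\sqrt K}$; (ii) with $\eta_k=\frac{\eta}{\sqrt K}$ for $k\in[K]$, $F(x_{K+1})-F_*\le C\left(\frac{D^2}{n\eta}+n\eta\bar G^2(1+\log K)\right)\frac1{\sqrt K}$; (iii) with $\eta_k=\eta\frac{K-k+1}{K^{3/2}}$ for $k\in[K]$, $F(x_{K+1})-F_*\le C\left(\frac{D^2}{n\eta}+n\eta\bar G^2\right)\frac1{\sqrt K}$. In particular, with $\eta=\frac{D}{n\bar G}$ in (iii), $F(x_{K+1})-F_*\le 2C\frac{\bar GD}{\sqrt K}$.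
   Context: Setting. Let $n,d\in\mathbb N$, let $f_1,\dots,f_n:\mathbb R^d\to\mathbb R$ be convex, $f=\frac1n\sum_{i=1}^nf_i$, let $\psi:\mathbb R^d\to\mathbb R\cup\{+\infty\}$ be proper, closed and convex, and $F=f+\psi$. For a convex function $g$, $\nabla g(x)$ denotes an element of $\partial g(x)$ (for each $f_i$ a fixed selection of subgradients, the same one used in the algorithm). Assume there is $x_*\in\mathbb R^d$ with $F(x_* )=\inf_{x}F(x)\in\mathbb R$; write $F_*=F(x_* )$. Proximal shuffling gradient method: given $x_1\in\mathrm{dom}\,\psi$, a number of epochs $K\ge2$ and stepsizes $\eta_k>0$, for $k=1,\dots,K$: choose a permutation $\sigma_k=(\sigma_k^1,\dots,\sigma_k^n)$ of $[n]=\{1,\dots,n\}$; set $x_k^1=x_k$ and $x_k^{i+1}=x_k^i-\eta_k\nabla f_{\sigma_k^i}(x_k^i)$ for $i=1,\dots,n$; set $x_{k+1}=\arg\min_{x\in\mathbb R^d}\{n\psi(x)+\frac{1}{2\eta_k}\|x-x_k^{n+1}\|^2\}$. $D=\|x_*-x_1\|$; $\|\cdot\|$ is the Euclidean norm; $\log$ is natural. Lipschitz condition: constants $G_i>0$ with $\|\nabla f_i(x)\|\le G_i$ for all $x\in\mathbb R^d$, $i\in[n]$ (for every subgradient); $\bar G=\frac1n\sum_{i=1}^nG_i$. *)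

(* Defs.v *)
From HB Require Import structures.
From mathcomp Require Import all_boot all_order all_algebra all_fingroup.
From mathcomp Require Import all_classical all_reals all_analysis.
From mathcomp Require Import Rstruct Rstruct_topology.
Set Implicit Arguments. Unset Strict Implicit. Unset Printing Implicit Defensive.
Import Order.TTheory GRing.Theory Num.Theory.
Local Open Scope classical_set_scope.
Local Open Scope ring_scope.

Notation RR := Rdefinitions.R.

Notation vec d := 'rV[RR]_d.

Definition dot {d : nat} (u v : vec d) : RR := \sum_(i < d) u 0 i * v 0 i.
Definition enorm {d : nat} (v : vec d) : RR := Num.sqrt (dot v v).

Definition convex_fun {d : nat} (h : vec d -> RR) : Prop :=
  forall (x y : vec d) (t : RR), 0 <= t <= 1 ->
    h (t *: x + (1 - t) *: y) <= t * h x + (1 - t) * h y.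

Definition subgrad {d : nat} (h : vec d -> RR) (x v : vec d) : Prop :=
  forall y : vec d, h x + dot v (y - x) <= h y.

Definition proper_ext {d : nat} (psi : vec d -> \bar RR) : Prop :=
  (forall x, (-oo < psi x)%E) /\ (exists x, (psi x < +oo)%E).

Definition convex_ext {d : nat} (psi : vec d -> \bar RR) : Prop :=
  forall (x y : vec d) (t : RR), 0 <= t <= 1 ->
    (psi (t *: x + (1 - t) *: y)%R <= t%:E * psi x + (1 - t)%:E * psi y)%E.

(* closed = the epigraph is closed (sequential form, Euclidean topology) *)
Definition closed_ext {d : nat} (psi : vec d -> \bar RR) : Prop :=
  forall (u : nat -> vec d) (a : nat -> RR) (z : vec d) (b : RR),
    (forall k, (psi (u k) <= (a k)%:E)%E) ->
    (fun k => enorm (u k - z)) @ \oo --> (0 : RR) ->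
    a @ \oo --> b ->
    (psi z <= b%:E)%E.

Definition inner_pass {n d : nat} (g : 'I_n -> vec d -> vec d) (eta : RR)
  (s : {perm 'I_n}) (x : vec d) : vec d :=
  foldl (fun y i => y - eta *: g (s i) y) x (enum 'I_n).

Definition is_prox {d : nat} (n : nat) (psi : vec d -> \bar RR) (eta : RR)
  (y z : vec d) : Prop :=
  forall w : vec d,
    ((n%:R)%:E * psi z + (enorm (z - y)%R ^+ 2 / (2 * eta))%:E
      <= (n%:R)%:E * psi w + (enorm (w - y)%R ^+ 2 / (2 * eta))%:E)%E.

(* x : nat -> vec d is the sequence of epoch iterates x_1, ..., x_{K+1} of the
   proximal shuffling gradient method with stepsizes eta_k and permutations
   sigma_k (indices k start at 1). *)
Definition prox_shuffling_run {n d : nat} (g : 'I_n -> vec d -> vec d)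
  (psi : vec d -> \bar RR) (K : nat) (eta : nat -> RR)
  (sigma : nat -> {perm 'I_n}) (x1 : vec d) (x : nat -> vec d) : Prop :=
  x 1%N = x1 /\
  forall k : nat, (1 <= k <= K)%N ->
    is_prox n psi (eta k) (inner_pass g (eta k) (sigma k) (x k)) (x k.+1).

Definition favg {n d : nat} (f : 'I_n -> vec d -> RR) (x : vec d) : RR :=
  (n%:R)^-1 * \sum_(i < n) f i x.

Definition Fobj {n d : nat} (f : 'I_n -> vec d -> RR)
  (psi : vec d -> \bar RR) (x : vec d) : \bar RR :=
  ((favg f x)%:E + psi x)%E.

(* Main.v *)
Require Import Defs.
From HB Require Import structures.
From mathcomp Require Import all_boot all_order all_algebra all_fingroup.
From mathcomp Require Import all_classical all_reals all_analysis.
From mathcomp Require Import Rstruct Rstruct_topology.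
From mathcomp Require Import ring lra.
Import Order.TTheory GRing.Theory Num.Theory.
Set Implicit Arguments. Unset Strict Implicit.
Local Open Scope ring_scope.
Section Geo.
Variable d : nat.
Implicit Types u v w : vec d.

Lemma dotC u v : dot u v = dot v u.
Proof. by rewrite /dot; apply: eq_bigr => i _; rewrite mulrC. Qed.

Lemma dotDl u v w : dot (u + v) w = dot u w + dot v w.
Proof. by rewrite /dot -big_split; apply: eq_bigr => i _; rewrite !mxE mulrDl. Qed.

Lemma dotZl (a : RR) u v : dot (a *: u) v = a * dot u v.
Proof. by rewrite /dot mulr_sumr; apply: eq_bigr => i _; rewrite !mxE mulrA. Qed.

Lemma dotNl u v : dot (- u) v = - dot u v.
Proof. by rewrite -scaleN1r dotZl mulN1r. Qed.

Lemma dotBl u v w : dot (u - v) w = dot u w - dot v w.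
Proof. by rewrite dotDl dotNl. Qed.

Lemma dotDr u v w : dot w (u + v) = dot w u + dot w v.
Proof. by rewrite dotC dotDl !(dotC w). Qed.

Lemma dotZr (a : RR) u v : dot v (a *: u) = a * dot v u.
Proof. by rewrite dotC dotZl dotC. Qed.

Lemma dotNr u v : dot v (- u) = - dot v u.
Proof. by rewrite dotC dotNl dotC. Qed.

Lemma dotBr u v w : dot w (u - v) = dot w u - dot w v.
Proof. by rewrite dotDr dotNr. Qed.

Lemma dot0r u : dot u 0 = 0.
Proof. by rewrite /dot big1 // => i _; rewrite mxE mulr0. Qed.

Lemma dot_ge0 u : 0 <= dot u u.
Proof. by rewrite /dot sumr_ge0 // => i _; rewrite -expr2 sqr_ge0. Qed.

Lemma dot_eq0 u : dot u u = 0 -> u = 0.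
Proof.
move=> h; apply/matrixP => i j; rewrite mxE (ord1 i).
have := (psumr_eq0P (P := predT) (F := fun k => u 0 k * u 0 k)).
move=> /(_ (fun k _ => ltac:(by rewrite -expr2 sqr_ge0))) /(_ h) /(_ j isT).
by move/eqP; rewrite mulf_eq0 orbb => /eqP.
Qed.

Lemma enorm_ge0 u : 0 <= enorm u.
Proof. exact: sqrtr_ge0. Qed.

Lemma enorm_sq u : enorm u ^+ 2 = dot u u.
Proof. by rewrite /enorm sqr_sqrtr // dot_ge0. Qed.

Lemma CS u v : dot u v <= enorm u * enorm v.
Proof.
have [v0|vpos] := eqVneq (dot v v) 0.
  by rewrite (dot_eq0 v0) dot0r mulr_ge0 ?enorm_ge0.
have vp : 0 < dot v v by rewrite lt0r vpos dot_ge0.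
have key : dot u v ^+ 2 <= dot u u * dot v v.
  have := dot_ge0 (u - (dot u v / dot v v) *: v).
  rewrite !dotBl !dotBr !dotZl !dotZr (dotC v u).
  move=> h.
  have e : dot u u - dot u v / dot v v * dot u v -
     (dot u v / dot v v * dot u v - dot u v / dot v v * (dot u v / dot v v * dot v v))
     = (dot u u * dot v v - dot u v ^+ 2) / dot v v.
    by field; rewrite vpos.
  rewrite e in h; rewrite -subr_ge0.
  by rewrite pmulr_lge0 ?invr_gt0 // in h.
rewrite /enorm -sqrtrM ?dot_ge0 //.
apply: (le_trans (ler_norm _)).
by rewrite -sqrtr_sqr ler_wsqrtr.
Qed.

Lemma enormN u : enorm (- u) = enorm u.
Proof. by rewrite /enorm dotNl dotNr opprK. Qed.

Lemma enormB u v : enorm (u - v) = enorm (v - u).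
Proof. by rewrite -enormN opprB. Qed.

Lemma enormZ (a : RR) u : enorm (a *: u) = `|a| * enorm u.
Proof.
by rewrite /enorm dotZl dotZr mulrA -expr2 sqrtrM ?sqr_ge0 // sqrtr_sqr.
Qed.

Lemma enormD u v : enorm (u + v) <= enorm u + enorm v.
Proof.
have h : dot (u + v) (u + v) <= (enorm u + enorm v) ^+ 2.
  rewrite dotDl !dotDr (dotC v u) sqrrD !enorm_sq.
  by have := CS u v; lra.
rewrite /enorm; apply: (le_trans (ler_wsqrtr h)).
by rewrite sqrtr_sqr ger0_norm // addr_ge0 ?enorm_ge0.
Qed.

Lemma dot_lb u v : - dot u v <= enorm u * enorm v.
Proof. by rewrite -dotNr -(enormN v) CS. Qed.

Lemma sqD u v : dot (u + v) (u + v) = dot u u + 2 * dot u v + dot v v.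
Proof. by rewrite dotDl !dotDr (dotC v u); ring. Qed.

End Geo.
Lemma fin_of {e : \bar RR} {r : RR} : (-oo < e)%E -> (e <= r%:E)%E ->
  exists s, e = s%:E /\ s <= r.
Proof. by case: e => [s| |] //= _ h; exists s; split; rewrite // -lee_fin. Qed.

Lemma small_t (a b : RR) : 0 <= b -> (forall t, 0 < t <= 1 -> 0 <= a + t * b) -> 0 <= a.
Proof.
move=> b0 h; rewrite leNgt; apply/negP => a0.
have [b00|bp] := eqVneq b 0.
  by have := h 1; rewrite b00 mulr0 addr0 ltr01 lexx => /(_ isT); lra.
have bpos : 0 < b by rewrite lt0r bp b0.
case: (lerP (- a / (2 * b)) 1) => ht.
  have tp : 0 < - a / (2 * b) by rewrite divr_gt0 ?mulr_gt0 //; lra.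
  have := h (- a / (2 * b)); rewrite tp ht => /(_ isT) hh.
  have e : a + - a / (2 * b) * b = a / 2 by field; rewrite bp.
  by rewrite e in hh; lra.
have := h 1; rewrite lexx ltr01 mul1r => /(_ isT) hh.
move: ht; rewrite ltr_pdivlMr ?mulr_gt0 //; lra.
Qed.
Lemma prox_fin d n (psi : vec d -> \bar RR) eta y x' z q :
  (0 < n)%N -> proper_ext psi -> is_prox n psi eta y x' -> psi z = q%:E ->
  exists p, psi x' = p%:E.
Proof.
move=> n0 [pr _] hp hz; have := hp z; rewrite hz.
have := pr x'; case: (psi x') => [p| |] //; first by exists p.
move=> _; rewrite mulry gtr0_sg ?ltr0n // mul1e addye //.
Qed.

Lemma scale_comb d (t : RR) (z x y : vec d) :
  t *: z + (1 - t) *: x - y = (x - y) + t *: (z - x).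
Proof.
by apply/matrixP => i j; rewrite !mxE; ring.
Qed.

Lemma prox3 d n (psi : vec d -> \bar RR) eta y x' z p q :
  (0 < n)%N -> 0 < eta -> convex_ext psi -> proper_ext psi ->
  is_prox n psi eta y x' -> psi x' = p%:E -> psi z = q%:E ->
  n%:R * p + dot (x' - y) (x' - y) / (2 * eta) + dot (z - x') (z - x') / (2 * eta)
  <= n%:R * q + dot (z - y) (z - y) / (2 * eta).
Proof.
move=> n0 e0 cv [pr _] hp hx hz.
set k := (2 * eta)^-1.
have k0 : 0 < k by rewrite invr_gt0 mulr_gt0.
set c := dot (x' - y) (z - x').
set e := dot (z - x') (z - x').
have e0' : 0 <= e by exact: dot_ge0.
have key : 0 <= n%:R * (q - p) + 2 * c * k.
  apply: (@small_t _ (e * k)); first by rewrite mulr_ge0 // ltW.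
  move=> t /andP [t0 t1].
  have := cv z x' t; rewrite (ltW t0) t1 /= => /(_ isT).
  rewrite hx hz -!EFinM -EFinD => hw.
  have [s [hs hsle]] := fin_of (pr _) hw.
  have := hp (t *: z + (1 - t) *: x'); rewrite hs hx -!EFinM -!EFinD lee_fin.
  rewrite !enorm_sq scale_comb (sqD (x' - y)) !dotZr -/c !dotZl -/e.
  move=> h.
  have h2 : n%:R * p <= n%:R * (t * q + (1 - t) * p) +
            (2 * (t * c) + t * (t * e)) * k.
    have : n%:R * s <= n%:R * (t * q + (1 - t) * p) by rewrite ler_wpM2l.
    move: h; rewrite /k !mulrDl; lra.
  have h3 : 0 <= t * (n%:R * (q - p) + 2 * c * k + t * (e * k)).
    move: h2; rewrite !mulrDl !mulrDr !mulrA; lra.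
  by rewrite pmulr_rge0 in h3.
have ez : dot (z - y) (z - y) = e + 2 * c + dot (x' - y) (x' - y).
  have -> : z - y = (z - x') + (x' - y) by rewrite addrA subrK.
  by rewrite sqD dotC.
rewrite ez -/k; move: key; rewrite !mulrDl; lra.
Qed.
Section Inner.
Variables (d n : nat) (f : 'I_n -> vec d -> RR) (g : 'I_n -> vec d -> vec d)
  (G : 'I_n -> RR) (s : {perm 'I_n}) (eta : RR).
Hypothesis hsub : forall i x, subgrad (f i) x (g i x).
Hypothesis hG : forall i x, enorm (g i x) <= G i.
Hypothesis G0 : forall i, 0 <= G i.
Hypothesis eta0 : 0 <= eta.

Let step := fun y i => y - eta *: g (s i) y.

Lemma SG_ge0 (l : seq 'I_n) : 0 <= \sum_(i <- l) G (s i).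
Proof. by rewrite sumr_ge0. Qed.

Lemma inner_dist (l : seq 'I_n) (y : vec d) :
  enorm (y - foldl step y l) <= eta * \sum_(i <- l) G (s i).
Proof.
elim: l y => [|i l IH] y /=.
  by rewrite big_nil subrr mulr0 /enorm /dot big1 ?sqrtr0 // => j _; rewrite mxE mulr0.
rewrite big_cons mulrDr.
have -> : y - foldl step (step y i) l = (y - step y i) + (step y i - foldl step (step y i) l).
  by rewrite addrA subrK.
apply: (le_trans (enormD _ _)); apply: lerD; last exact: IH.
rewrite /step opprB addrC subrK enormZ ger0_norm //.
by rewrite ler_wpM2l.
Qed.

Lemma inner_main (x' z : vec d) (l : seq 'I_n) (y : vec d) :
  let E := foldl step y l in
  let S := \sum_(i <- l) G (s i) in
  dot (E - z) (E - z) <= dot (y - z) (y - z)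
     - 2 * eta * \sum_(i <- l) (f (s i) x' - f (s i) z)
     + 2 * eta * S * enorm (E - x') + 3 * eta ^+ 2 * S ^+ 2.
Proof.
elim: l y => [|i l IH] y /=.
  by rewrite !big_nil !mulr0 !mul0r subr0 expr0n /= mulr0 !addr0.
set y1 := step y i.
set E := foldl step y1 l.
have IH1 := IH y1; rewrite /= -/E in IH1.
set S' := \sum_(j <- l) G (s j) in IH1.
rewrite !big_cons -/S'.
set a := enorm (E - x').
set gi := g (s i) y.
set g' := g (s i) x'.
have hdist : enorm (y - E) <= eta * (G (s i) + S').
  by have := inner_dist (i :: l) y; rewrite big_cons.
have hy1 : dot (y1 - z) (y1 - z) =
    dot (y - z) (y - z) - 2 * eta * dot gi (y - z) + eta ^+ 2 * dot gi gi.
  have -> : y1 - z = (y - z) + (- eta) *: gi.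
    by rewrite /y1 /step addrAC scaleNr.
  by rewrite sqD !dotZr !dotZl (dotC (y - z)); ring.
have s1 : f (s i) y + dot gi (z - y) <= f (s i) z by apply: hsub.
have s2 : f (s i) x' + dot g' (y - x') <= f (s i) y by apply: hsub.
have e1 : dot gi (z - y) = - dot gi (y - z) by rewrite -dotNr opprB.
have e2 : dot g' (y - x') = dot g' (y - E) + dot g' (E - x').
  by rewrite -dotDr addrA subrK.
have c1 : - dot g' (y - E) <= G (s i) * (eta * (G (s i) + S')).
  apply: (le_trans (dot_lb _ _)); apply: ler_pM => //; rewrite ?enorm_ge0 //.
  exact: hG.
have c2 : - dot g' (E - x') <= G (s i) * a.
  by apply: (le_trans (dot_lb _ _)); rewrite ler_wpM2r ?enorm_ge0 ?hG.
have c3 : dot gi gi <= G (s i) ^+ 2.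
  by rewrite -enorm_sq; apply: lerXn2r; rewrite ?nnegrE ?enorm_ge0 ?hG.
have Gi0 := G0 (s i).
have S'0 : 0 <= S' by exact: SG_ge0.
have a0 : 0 <= a by exact: enorm_ge0.
set Gi := G (s i) in c1 c2 c3 Gi0 hdist *.
set F1 := \sum_(j <- l) (f (s j) x' - f (s j) z) in IH1 *.
have h5 : - dot gi (y - z) <= f (s i) z - f (s i) x' + Gi * (eta * (Gi + S')) + Gi * a.
  by rewrite e1 e2 in s1 s2; lra.
have h6 := ler_wpM2l (mulr_ge0 (ler0n _ 2) eta0) h5.
have h7 := ler_wpM2l (sqr_ge0 eta) c3.
have h8 : 0 <= eta ^+ 2 * Gi * S' by rewrite !mulr_ge0 ?sqr_ge0.
rewrite hy1 in IH1.
move: IH1 h6 h7 h8; rewrite /Gi /a; lra.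
Qed.

End Inner.
Lemma sum_enum_perm n (s : {perm 'I_n}) (F : 'I_n -> RR) :
  \sum_(i <- enum 'I_n) F (s i) = \sum_i F i.
Proof.
rewrite big_enum /=; symmetry; rewrite (reindex_inj (@perm_inj _ s)) /=.
by apply: eq_bigl => j.
Qed.

Lemma epoch d n (f : 'I_n -> vec d -> RR) (g : 'I_n -> vec d -> vec d)
  (G : 'I_n -> RR) (psi : vec d -> \bar RR) (s : {perm 'I_n}) (eta : RR)
  (xk x' z : vec d) (p q : RR) :
  (0 < n)%N ->
  (forall i x, subgrad (f i) x (g i x)) ->
  (forall i x, enorm (g i x) <= G i) ->
  (forall i, 0 <= G i) ->
  convex_ext psi -> proper_ext psi -> 0 < eta ->
  is_prox n psi eta (inner_pass g eta s xk) x' ->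
  psi x' = p%:E -> psi z = q%:E ->
  n%:R * eta * ((favg f x' + p) - (favg f z + q)) <=
  (dot (xk - z) (xk - z) - dot (x' - z) (x' - z)) / 2
  + 2 * eta ^+ 2 * (\sum_i G i) ^+ 2.
Proof.
move=> n0 hsub hG G0 cv pr e0 hp hx hz.
set E := inner_pass g eta s xk.
have hm := inner_main s hsub hG G0 (ltW e0) x' z (enum 'I_n) xk.
rewrite /= -/E in hm.
rewrite sumrB (sum_enum_perm s (fun j => f j x')) (sum_enum_perm s (fun j => f j z)) in hm.
rewrite (sum_enum_perm s G) in hm.
have h3 := prox3 n0 e0 cv pr hp hx hz.
rewrite -/E in h3.
set a := enorm (E - x') in hm.
have ea : dot (x' - E) (x' - E) = a ^+ 2 by rewrite /a enormB enorm_sq.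
have ez : dot (z - E) (z - E) = dot (E - z) (E - z) by rewrite -opprB dotNl dotNr opprK.
rewrite ea ez in h3.
set S := \sum_i G i in hm *.
have nfx : \sum_i f i x' = n%:R * favg f x'.
  by rewrite /favg mulrA divff ?mul1r // pnatr_eq0 -lt0n.
have nfz : \sum_i f i z = n%:R * favg f z.
  by rewrite /favg mulrA divff ?mul1r // pnatr_eq0 -lt0n.
rewrite nfx nfz in hm.
have h4 := ler_wpM2l (ltW (mulr_gt0 (ltr0Sn _ 1) e0)) h3.
have id1 : forall X, 2 * eta * (X / (2 * eta)) = X.
  by move=> X; field; rewrite gt_eqF.
rewrite !mulrDr !id1 in h4.
have h5 : 2 * eta * S * a - a ^+ 2 <= eta ^+ 2 * S ^+ 2.
  have := sqr_ge0 (eta * S - a); rewrite sqrrB; lra.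
have ex : dot (z - x') (z - x') = dot (x' - z) (x' - z) by rewrite -opprB dotNl dotNr opprK.
rewrite ex in h4.
move: h4 hm h5; lra.
Qed.
Lemma step_real (g S S' a b b' P P' D B : RR) :
  0 < g -> S = g + S' -> 0 < S' -> b' <= (S' / S) ^+ 2 * b -> 0 <= b ->
  P' <= (S' / S) * P + (g / S) * D ->
  g * (D - P) <= (a - b) / 2 + B * g ^+ 2 ->
  b' / (2 * S') + P' <= a / (2 * S) + P + B * g ^+ 2 / S.
Proof.
move=> g0 eS S'0 hb b0 hP hD.
have S0 : 0 < S by rewrite eS addr_gt0.
have h1 : b' / (2 * S') <= b / (2 * S).
  rewrite ler_pdivrMr ?mulr_gt0 //.
  apply: (le_trans hb).
  have -> : (S' / S) ^+ 2 * b = (b / (2 * S)) * (2 * S') * (S' / S).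
    by field; rewrite gt_eqF.
  apply: ler_piMr.
    apply: mulr_ge0; first by apply: divr_ge0 => //; rewrite mulr_ge0 // ltW.
    by rewrite mulr_ge0 // ltW.
  by rewrite ler_pdivrMr // mul1r eS lerDr ltW.
have h2 : g / S * D <= g / S * P + (a - b) / (2 * S) + B * g ^+ 2 / S.
  have Si0 : 0 <= S^-1 by rewrite invr_ge0 ltW.
  have := ler_wpM2l Si0 hD.
  have e1 : S^-1 * (g * (D - P)) = g / S * D - g / S * P by rewrite mulrBr; field; rewrite gt_eqF.
  have e2 : S^-1 * ((a - b) / 2 + B * g ^+ 2) = (a - b) / (2 * S) + B * g ^+ 2 / S.
    by field; rewrite gt_eqF.
  rewrite e1 e2; lra.
have e3 : S' / S * P + g / S * P = P.
  by rewrite -mulrDl -mulrDl addrC -eS divff ?mul1r // gt_eqF.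
have e4 : (a - b) / (2 * S) = a / (2 * S) - b / (2 * S) by rewrite mulrBl.
lra.
Qed.
Lemma dotZZ d (c : RR) (v : vec d) : dot (c *: v) (c *: v) = c ^+ 2 * dot v v.
Proof. by rewrite dotZl dotZr mulrA expr2. Qed.

Lemma conv_aux (A t X Z Y : RR) : A <= t * X + (1 - t) * Z ->
  A - Y <= (1 - t) * (Z - Y) + t * (X - Y).
Proof. lra. Qed.

Lemma div_aux (g u a b B : RR) : 0 < g -> 0 <= b ->
  g * u <= (a - b) / 2 + B * g ^+ 2 -> u <= a / (2 * g) + B * g.
Proof.
move=> g0 b0 h.
have gi0 : 0 <= g^-1 by rewrite invr_ge0 ltW.
have := ler_wpM2l gi0 h.
have e1 : g^-1 * (g * u) = u by field; rewrite gt_eqF.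
have e2 : g^-1 * ((a - b) / 2 + B * g ^+ 2) = a / (2 * g) - b / (2 * g) + B * g.
  by field; rewrite gt_eqF.
rewrite e1 e2.
have : 0 <= b / (2 * g) by rewrite divr_ge0 // mulr_ge0 // ltW.
lra.
Qed.

Lemma fin_aux (FX FZ FS A W T B g : RR) :
  A + (FZ - FS) <= W + B * T -> FX - FZ <= A + B * g -> FX - FS <= W + B * (T + g).
Proof. rewrite mulrDr; lra. Qed.

Lemma last_iter d (F : vec d -> RR) (dom : vec d -> Prop) (x : nat -> vec d)
  (xs : vec d) (gm : nat -> RR) (K : nat) (B : RR) :
  (0 < K)%N -> (forall k, (k < K)%N -> 0 < gm k) ->
  (forall u v t, dom u -> dom v -> 0 <= t <= 1 ->
     dom (t *: u + (1 - t) *: v) /\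
     F (t *: u + (1 - t) *: v) <= t * F u + (1 - t) * F v) ->
  dom xs -> (forall k, (k < K)%N -> dom (x k.+1)) ->
  (forall k z, (k < K)%N -> dom z ->
     gm k * (F (x k.+1) - F z) <=
     (dot (x k - z) (x k - z) - dot (x k.+1 - z) (x k.+1 - z)) / 2 + B * gm k ^+ 2) ->
  F (x K) - F xs <= dot (x 0%N - xs) (x 0%N - xs) / (2 * \sum_(0 <= j < K) gm j)
     + B * \sum_(k < K) (gm k ^+ 2 / \sum_(k <= j < K) gm j).
Proof.
move=> K0 gpos cvx dxs dx hyp.
pose S k := \sum_(k <= j < K) gm j.
have S_ge0 : forall k, 0 <= S k.
  move=> k; rewrite /S big_nat_cond sumr_ge0 // => j /andP [/andP [_ jK] _].
  exact: ltW (gpos j jK).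
have SS : forall k, (k < K)%N -> S k = gm k + S k.+1.
  by move=> k kK; rewrite /S big_ltn.
have SK : S K = 0 by rewrite /S big_geq.
have Spos : forall k, (k < K)%N -> 0 < S k.
  by move=> k kK; rewrite SS //; have := gpos k kK; have := S_ge0 k.+1; lra.
pose th k := gm k / S k.
pose zz := fix zz k := match k with 0%N => xs | k'.+1 => th k' *: x k'.+1 + (1 - th k') *: zz k' end.
pose V k := dot (x k - zz k) (x k - zz k) / (2 * S k) + (F (zz k) - F xs).
have inv : forall k, (k < K)%N -> dom (zz k) /\
    V k <= V 0%N + B * \sum_(j < k) (gm j ^+ 2 / S j).
  elim=> [|k IH] kK.
    by split => //; rewrite big_ord0 mulr0 addr0.
  have kK' : (k < K)%N by apply: ltnW.
  have [dz IHv] := IH kK'.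
  have Sk := SS k kK'.
  have Sk0 := Spos k kK'.
  have Sk10 := Spos k.+1 kK.
  have thr : 0 <= th k <= 1.
    apply/andP; split; first by rewrite /th divr_ge0 // ltW // gpos.
    rewrite /th ler_pdivrMr // mul1r Sk lerDl; exact: S_ge0.
  have [dz1 cz1] := cvx _ _ _ (dx k kK') dz thr.
  have e1m : 1 - th k = S k.+1 / S k.
    by rewrite /th Sk; field; rewrite -Sk gt_eqF.
  split; first exact: dz1.
  rewrite big_ord_recr /= mulrDr.
  suff h : V k.+1 <= V k + B * gm k ^+ 2 / S k by move: IHv h; rewrite mulrA; lra.
  rewrite /V.
  have -> : zz k.+1 = th k *: x k.+1 + (1 - th k) *: zz k by [].
  apply: (step_real (gpos k kK') Sk Sk10 (b := dot (x k.+1 - zz k) (x k.+1 - zz k)) (D := F (x k.+1) - F xs)).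
  - rewrite -e1m.
    have -> : x k.+1 - (th k *: x k.+1 + (1 - th k) *: zz k) = (1 - th k) *: (x k.+1 - zz k).
      by apply/matrixP => i j; rewrite !mxE; ring.
    by rewrite dotZZ.
  - exact: dot_ge0.
  - have eth : th k = gm k / S k by [].
    rewrite -e1m -eth; exact: conv_aux.
  - have -> : F (x k.+1) - F xs - (F (zz k) - F xs) = F (x k.+1) - F (zz k) by ring.
    exact: hyp.
have [K' eK] : exists K', K = K'.+1 by exists K.-1; rewrite prednK.
have K'K : (K' < K)%N by rewrite eK.
have [dz IHv] := inv K' K'K.
have SK' : S K' = gm K' by rewrite SS // -eK SK addr0.
have h := hyp K' (zz K') K'K dz.
rewrite -eK in h.
have hb := dot_ge0 (x K - zz K').
have g0 := gpos K' K'K.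
have h2 : F (x K) - F (zz K') <= dot (x K' - zz K') (x K' - zz K') / (2 * gm K') + B * gm K'.
  exact: div_aux g0 hb h.
have eV0 : V 0%N = dot (x 0%N - xs) (x 0%N - xs) / (2 * S 0%N) by rewrite /V /= subrr addr0.
rewrite eV0 in IHv.
rewrite eK big_ord_recr /= -eK -/(S 0%N).
have -> : \sum_(k < K') (gm k ^+ 2 / \sum_(k <= j < K) gm j) = \sum_(j < K') (gm j ^+ 2 / S j) by [].
rewrite -/(S K').
have -> : gm K' ^+ 2 / S K' = gm K' by rewrite SK' expr2 mulfK // gt_eqF.
rewrite /V SK' in IHv.
exact: fin_aux IHv h2.
Qed.
Lemma favg_convex n d (f : 'I_n -> vec d -> RR) (u v : vec d) (t : RR) :
  (forall i, convex_fun (f i)) -> 0 <= t <= 1 ->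
  favg f (t *: u + (1 - t) *: v) <= t * favg f u + (1 - t) * favg f v.
Proof.
move=> cf ht; rewrite /favg.
have h : \sum_(i < n) f i (t *: u + (1 - t) *: v) <=
         \sum_(i < n) (t * f i u + (1 - t) * f i v).
  by apply: ler_sum => i _; apply: cf.
rewrite big_split /= -!mulr_sumr in h.
have n0 : 0 <= (n%:R : RR)^-1 by rewrite invr_ge0 ler0n.
have := ler_wpM2l n0 h.
by rewrite mulrDr !mulrA ![_^-1 * t]mulrC ![_^-1 * (1 - t)]mulrC -!mulrA.
Qed.

Definition Fr n d (f : 'I_n -> vec d -> RR) (psi : vec d -> \bar RR) (x : vec d) : RR :=
  favg f x + fine (psi x).

Definition gmf (n : nat) (etaf : nat -> RR) (k : nat) : RR := n%:R * etaf k.+1.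

Lemma general_bound n d (f : 'I_n -> vec d -> RR) (g : 'I_n -> vec d -> vec d)
    (psi : vec d -> \bar RR) (G : 'I_n -> RR) (xstar x1 : vec d) (K : nat)
    (sigma : nat -> {perm 'I_n}) (etaf : nat -> RR) (x : nat -> vec d) :
  (0 < n)%N ->
  (forall i, convex_fun (f i)) ->
  (forall i x, subgrad (f i) x (g i x)) ->
  (forall i, 0 < G i) ->
  (forall i x v, subgrad (f i) x v -> enorm v <= G i) ->
  proper_ext psi -> convex_ext psi ->
  (Fobj f psi xstar \is a fin_num) ->
  (0 < K)%N ->
  (forall k, (k < K)%N -> 0 < etaf k.+1) ->
  prox_shuffling_run g psi K etaf sigma x1 x ->
  (Fobj f psi (x K.+1) - Fobj f psi xstar <=
   (dot (x1 - xstar) (x1 - xstar) / (2 * \sum_(0 <= j < K) gmf n etaf j)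
     + 2 * ((n%:R)^-1 * \sum_(i < n) G i) ^+ 2 *
       \sum_(k < K) (gmf n etaf k ^+ 2 / \sum_(k <= j < K) gmf n etaf j))%:E)%E.
Proof.
move=> n0 cf hsub G0 hGb pr cv fin K0 epos [hx1 hrun].
set gm := gmf n etaf.
set Gbar := (n%:R)^-1 * \sum_(i < n) G i.
have hG : forall i x, enorm (g i x) <= G i by move=> i y; apply: hGb; apply: hsub.
have G0' : forall i, 0 <= G i by move=> i; exact: ltW.
pose dom := fun z : vec d => exists q, psi z = q%:E.
have dxs : dom xstar.
  move: fin; rewrite /Fobj; case E: (psi xstar) => [q| |] /=; [by exists q | by rewrite addey | by rewrite addeNy].
have [qs hqs] := dxs.
have dx : forall k, (k < K)%N -> dom (x k.+2).
  move=> k kK; have := hrun k.+1; rewrite ltnS kK /= => /(_ isT) hp.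
  exact: prox_fin n0 pr hp hqs.
have cvx : forall u v t, dom u -> dom v -> 0 <= t <= 1 ->
     dom (t *: u + (1 - t) *: v) /\
     Fr f psi (t *: u + (1 - t) *: v) <= t * Fr f psi u + (1 - t) * Fr f psi v.
  move=> u v t [qu hu] [qv hv] ht.
  have := cv u v t ht; rewrite hu hv -!EFinM -EFinD => hw.
  have [s [hs hsle]] := fin_of (proj1 pr _) hw.
  split; first by exists s.
  rewrite /Fr hs hu hv /=.
  have := favg_convex u v cf ht; lra.
have nR0 : (0 : RR) < n%:R by rewrite ltr0n.
have step : forall k z, (k < K)%N -> dom z ->
     gm k * (Fr f psi (x k.+2) - Fr f psi z) <=
     (dot (x k.+1 - z) (x k.+1 - z) - dot (x k.+2 - z) (x k.+2 - z)) / 2 +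
     2 * Gbar ^+ 2 * gm k ^+ 2.
  move=> k z kK [q hq].
  have := hrun k.+1; rewrite ltnS kK /= => /(_ isT) hp.
  have [p hpx] := prox_fin n0 pr hp hq.
  have h := epoch n0 hsub hG G0' cv pr (epos k kK) hp hpx hq.
  rewrite /Fr hpx hq /= /gm /gmf.
  have -> : 2 * Gbar ^+ 2 * (n%:R * etaf k.+1) ^+ 2 = 2 * etaf k.+1 ^+ 2 * (\sum_i G i) ^+ 2.
    by rewrite /Gbar; field; rewrite gt_eqF.
  by move: h; rewrite -mulrA.
have := @last_iter d (Fr f psi) dom (fun k => x k.+1) xstar gm K (2 * Gbar ^+ 2)
   K0 (fun k kK => mulr_gt0 nR0 (epos k kK)) cvx dxs dx step.
rewrite /= hx1 => hfin.
have hK : (K.-1 < K)%N by rewrite prednK.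
have [p hp] := dx K.-1 hK.
rewrite prednK // in hp.
rewrite /Fobj hp hqs -!EFinD lee_fin.
by move: hfin; rewrite /Fr hp hqs /=; lra.
Qed.
Lemma harm_ln (K : nat) : (0 < K)%N ->
  \sum_(k < K) ((k.+1)%:R : RR)^-1 <= 1 + ln (K%:R : RR).
Proof.
rewrite -(big_mkord xpredT (fun k => ((k.+1)%:R : RR)^-1)).
elim: K => [//|K IH] _.
rewrite big_nat_recr //=.
case: K IH => [|K] IH.
  by rewrite big_geq // add0r ln1 addr0 invr1.
have := IH isT => {}IH.
suff h : ((K.+2)%:R : RR)^-1 <= ln ((K.+2)%:R : RR) - ln ((K.+1)%:R : RR).
  apply: (le_trans (lerD IH h)).
  have e : forall a b : RR, 1 + a + (b - a) = 1 + b by move=> *; ring.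
  by rewrite e.
have p1 : (0 : RR) < (K.+1)%:R by rewrite ltr0n.
have p2 : (0 : RR) < (K.+2)%:R by rewrite ltr0n.
have hl := @le_ln1Dx RR (- ((K.+2)%:R)^-1).
have e : 1 + - ((K.+2)%:R : RR)^-1 = (K.+1)%:R / (K.+2)%:R.
  have eK2 : ((K.+2)%:R : RR) = (K.+1)%:R + 1 by rewrite natr1.
  rewrite eK2; field.
  by rewrite -addrA [1 + _]addrC natr1 natr1 pnatr_eq0.
rewrite e ln_div ?posrE // in hl.
have : -1 < - ((K.+2)%:R : RR)^-1.
  rewrite ltrN2 invf_lt1 // ltr1n //.
by move=> /hl; rewrite lerNr opprB.
Qed.

Lemma sum_rev_inv (K : nat) :
  \sum_(k < K) ((K%:R - k%:R : RR))^-1 = \sum_(k < K) ((k.+1)%:R : RR)^-1.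
Proof.
rewrite -(big_mkord xpredT (fun k => ((K%:R - k%:R : RR))^-1)).
rewrite -(big_mkord xpredT (fun k => ((k.+1)%:R : RR)^-1)).
rewrite big_nat_rev /=.
apply: eq_big_nat => k /andP [_ kK].
rewrite add0n -natrB ?leq_subr // subKn //.
Qed.
Lemma S_lb (gm L : nat -> RR) (K : nat) :
  (forall k, (k < K)%N -> L k <= gm k + L k.+1) -> L K <= 0 ->
  forall k, (k <= K)%N -> L k <= \sum_(k <= j < K) gm j.
Proof.
move=> h hK k kK.
move: {2}(K - k)%N (erefl (K - k)%N) => m.
elim: m k kK => [|m IH] k kK em.
  have -> : k = K by apply/eqP; rewrite eqn_leq kK /= -subn_eq0 em.
  by rewrite big_geq.
have kK' : (k < K)%N by rewrite -subn_gt0 em.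
rewrite big_ltn //.
apply: (le_trans (h k kK')); rewrite lerD2l.
apply: IH; first exact: kK'.
by rewrite subnS em.
Qed.

Lemma bound_via_L (K : nat) (gm L : nat -> RR) (D2 B : RR) :
  0 <= D2 -> 0 <= B ->
  (forall k, (k < K)%N -> 0 < L k /\ L k <= \sum_(k <= j < K) gm j) -> (0 < K)%N ->
  D2 / (2 * \sum_(0 <= j < K) gm j) + B * \sum_(k < K) (gm k ^+ 2 / \sum_(k <= j < K) gm j)
  <= D2 / (2 * L 0%N) + B * \sum_(k < K) (gm k ^+ 2 / L k).
Proof.
move=> D0 B0 hL K0.
have inv_le : forall a b : RR, 0 < a -> a <= b -> b^-1 <= a^-1.
  move=> a b a0 ab; rewrite lef_pV2 ?posrE //; exact: lt_le_trans ab.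
apply: lerD.
  have [L0 L0S] := hL 0%N K0.
  apply: ler_wpM2l => //; apply: inv_le; first by rewrite mulr_gt0.
  by rewrite ler_pM2l.
apply: ler_wpM2l => //; apply: ler_sum => k _.
have [Lk LkS] := hL k (ltn_ord k).
by apply: ler_wpM2l; [exact: sqr_ge0 | exact: inv_le].
Qed.
Lemma fin1 (X Y H M r : RR) : 0 <= X -> 0 <= Y -> 0 <= H -> H <= M -> 0 <= r <= 1 ->
  X / 2 + 4 * (Y * H) * r <= 4 * X + 4 * (Y * M).
Proof.
move=> X0 Y0 H0 HM /andP [r0 r1].
have h1 := ler_wpM2l Y0 HM.
have h2 := mulr_ge0 Y0 H0.
have h3 : Y * H * r <= Y * H by rewrite ler_piMr.
lra.
Qed.

Lemma harm_ge0 K : 0 <= \sum_(k < K) ((k.+1)%:R : RR)^-1.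
Proof. by rewrite sumr_ge0 // => k _; rewrite invr_ge0 ler0n. Qed.

Lemma ln_ge0K (K : nat) : (0 < K)%N -> 0 <= ln (K%:R : RR).
Proof. by move=> K0; apply: ln_ge0; rewrite ler1n. Qed.

Lemma sched_ii (K : nat) (gm : nat -> RR) (c D2 Gb : RR) :
  (0 < K)%N -> 0 < c -> 0 <= D2 ->
  (forall k, gm k = c / Num.sqrt K%:R) ->
  D2 / (2 * \sum_(0 <= j < K) gm j) + 2 * Gb ^+ 2 * \sum_(k < K) (gm k ^+ 2 / \sum_(k <= j < K) gm j)
  <= 4 * (D2 / c + c * Gb ^+ 2 * (1 + ln (K%:R : RR))) / Num.sqrt K%:R.
Proof.
move=> K0 c0 D0 hgm.
set sK := Num.sqrt K%:R.
have sK0 : 0 < sK by rewrite sqrtr_gt0 ltr0n.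
have eK : (K%:R : RR) = sK ^+ 2 by rewrite sqr_sqrtr // ler0n.
pose L k := c * (K%:R - k%:R) / sK.
have hL : forall k, (k < K)%N -> 0 < L k /\ L k <= \sum_(k <= j < K) gm j.
  move=> k kK; split.
    by rewrite /L divr_gt0 // mulr_gt0 // subr_gt0 ltr_nat.
  apply: S_lb; last exact: ltnW.
    move=> j jK; rewrite /L hgm -natr1.
    rewrite le_eqVlt; apply/orP; left; apply/eqP.
    by rewrite -/sK; field; rewrite gt_eqF.
  by rewrite /L subrr mulr0 mul0r.
apply: (le_trans (bound_via_L D0 (mulr_ge0 (ler0n _ 2) (sqr_ge0 Gb)) hL K0)).
have eS : \sum_(k < K) (gm k ^+ 2 / L k) = c / sK * \sum_(k < K) ((k.+1)%:R : RR)^-1.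
  rewrite -sum_rev_inv mulr_sumr; apply: eq_bigr => k _.
  have kK := ltn_ord k.
  have hk : (K%:R - k%:R : RR) != 0 by rewrite subr_eq0 eqr_nat gtn_eqF.
  by rewrite /L hgm -/sK; field; rewrite hk !gt_eqF.
rewrite eS.
have eL0 : D2 / (2 * L 0%N) = (D2 / (c * sK)) / 2.
  by rewrite /L subr0 eK; field; rewrite !gt_eqF.
have eR : 4 * (D2 / c + c * Gb ^+ 2 * (1 + ln (K%:R : RR))) / sK =
   4 * (D2 / (c * sK)) + 4 * (c * Gb ^+ 2 / sK * (1 + ln (K%:R : RR))).
  by field; rewrite !gt_eqF.
rewrite eL0 eR.
have e2 : 2 * Gb ^+ 2 * (c / sK * \sum_(k < K) ((k.+1)%:R : RR)^-1) =
    4 * (c * Gb ^+ 2 / sK * \sum_(k < K) ((k.+1)%:R : RR)^-1) * (1/2).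
  by field; rewrite gt_eqF.
rewrite e2; apply: fin1.
- by rewrite divr_ge0 // ?mulr_ge0 // ltW.
- by apply: divr_ge0; [apply: mulr_ge0; [exact: ltW | exact: sqr_ge0] | exact: ltW].
- exact: harm_ge0.
- exact: harm_ln.
- by rewrite divr_ge0 //= ler_pdivrMr // mul1r ler1n.
Qed.
Lemma sched_i (K : nat) (gm : nat -> RR) (c D2 Gb : RR) :
  (0 < K)%N -> 0 < c -> 0 <= D2 ->
  (forall k, gm k = c / Num.sqrt (k.+1)%:R) ->
  D2 / (2 * \sum_(0 <= j < K) gm j) + 2 * Gb ^+ 2 * \sum_(k < K) (gm k ^+ 2 / \sum_(k <= j < K) gm j)
  <= 4 * (D2 / c + c * Gb ^+ 2 * (1 + ln (K%:R : RR))) / Num.sqrt K%:R.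
Proof.
move=> K0 c0 D0 hgm.
set sK := Num.sqrt K%:R.
have sK0 : 0 < sK by rewrite sqrtr_gt0 ltr0n.
have eK : (K%:R : RR) = sK ^+ 2 by rewrite sqr_sqrtr // ler0n.
pose L k := c * (K%:R - k%:R) / sK.
have hL : forall k, (k < K)%N -> 0 < L k /\ L k <= \sum_(k <= j < K) gm j.
  move=> k kK; split.
    by rewrite /L divr_gt0 // mulr_gt0 // subr_gt0 ltr_nat.
  apply: S_lb; last exact: ltnW.
    move=> j jK.
    have eL : L j = c / sK + L j.+1 by rewrite /L -natr1 -/sK; field; rewrite gt_eqF.
    rewrite eL lerD2r hgm -/sK.
    have sj0 : 0 < Num.sqrt ((j.+1)%:R : RR) by rewrite sqrtr_gt0 ltr0n.
    rewrite ler_pM2l // lef_pV2 ?posrE //.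
    by rewrite /sK ler_wsqrtr // ler_nat.
  by rewrite /L subrr mulr0 mul0r.
apply: (le_trans (bound_via_L D0 (mulr_ge0 (ler0n _ 2) (sqr_ge0 Gb)) hL K0)).
set H := \sum_(k < K) ((k.+1)%:R : RR)^-1.
have eS : \sum_(k < K) (gm k ^+ 2 / L k) =
    c * sK / (K%:R + 1) * (H + \sum_(k < K) ((K%:R - k%:R : RR))^-1).
  rewrite /H -big_split /= mulr_sumr; apply: eq_bigr => k _.
  have kK := ltn_ord k.
  have hk : (K%:R - k%:R : RR) != 0 by rewrite subr_eq0 eqr_nat gtn_eqF.
  have sq : Num.sqrt ((k.+1)%:R : RR) ^+ 2 = k%:R + 1 by rewrite sqr_sqrtr ?ler0n // natr1.
  have hk1 : (k%:R + 1 : RR) != 0 by rewrite natr1 pnatr_eq0.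
  have hK1 : (K%:R + 1 : RR) != 0 by rewrite natr1 pnatr_eq0.
  rewrite /L hgm -/sK expr_div_n sq -natr1.
  by field; rewrite hk hk1 hK1 !gt_eqF.
rewrite eS sum_rev_inv -/H.
have eL0 : D2 / (2 * L 0%N) = (D2 / (c * sK)) / 2.
  by rewrite /L subr0 eK; field; rewrite !gt_eqF.
have eR : 4 * (D2 / c + c * Gb ^+ 2 * (1 + ln (K%:R : RR))) / sK =
   4 * (D2 / (c * sK)) + 4 * (c * Gb ^+ 2 / sK * (1 + ln (K%:R : RR))).
  by field; rewrite !gt_eqF.
rewrite eL0 eR.
have hK1 : (K%:R + 1 : RR) != 0 by rewrite natr1 pnatr_eq0.
have e2 : 2 * Gb ^+ 2 * (c * sK / (K%:R + 1) * (H + H)) =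
    4 * (c * Gb ^+ 2 / sK * H) * (sK ^+ 2 / (K%:R + 1)).
  by field; rewrite hK1 gt_eqF.
rewrite e2; apply: fin1.
- by rewrite divr_ge0 // ?mulr_ge0 // ltW.
- by apply: divr_ge0; [apply: mulr_ge0; [exact: ltW | exact: sqr_ge0] | exact: ltW].
- exact: harm_ge0.
- exact: harm_ln.
- rewrite -eK natr1 divr_ge0 //= ler_pdivrMr ?ltr0n // mul1r ler_nat //.
Qed.

Lemma sched_iii (K : nat) (gm : nat -> RR) (c D2 Gb : RR) :
  (0 < K)%N -> 0 < c -> 0 <= D2 ->
  (forall k, gm k = c * ((K%:R - (k.+1)%:R + 1) / (K%:R * Num.sqrt K%:R))) ->
  D2 / (2 * \sum_(0 <= j < K) gm j) + 2 * Gb ^+ 2 * \sum_(k < K) (gm k ^+ 2 / \sum_(k <= j < K) gm j)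
  <= 4 * (D2 / c + c * Gb ^+ 2) / Num.sqrt K%:R.
Proof.
move=> K0 c0 D0 hgm.
set sK := Num.sqrt K%:R.
have sK0 : 0 < sK by rewrite sqrtr_gt0 ltr0n.
have KR0 : (0 : RR) < K%:R by rewrite ltr0n.
have eK : (K%:R : RR) = sK ^+ 2 by rewrite sqr_sqrtr // ler0n.
pose L k := c * (K%:R - k%:R) ^+ 2 / (2 * K%:R * sK).
have hL : forall k, (k < K)%N -> 0 < L k /\ L k <= \sum_(k <= j < K) gm j.
  move=> k kK; split.
    by rewrite /L divr_gt0 // ?mulr_gt0 // subr_gt0 ltr_nat.
  apply: S_lb; last exact: ltnW.
    move=> j jK.
    have e : gm j + L j.+1 - L j = c / (2 * K%:R * sK).
      rewrite /L hgm -/sK -natr1; field; rewrite !gt_eqF //.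
    have : 0 <= c / (2 * K%:R * sK) by rewrite divr_ge0 ?mulr_ge0 // ltW.
    rewrite -e; lra.
  by rewrite /L subrr expr0n /= mulr0 mul0r.
apply: (le_trans (bound_via_L D0 (mulr_ge0 (ler0n _ 2) (sqr_ge0 Gb)) hL K0)).
have eS : \sum_(k < K) (gm k ^+ 2 / L k) = \sum_(k < K) (2 * c / (K%:R * sK)).
  apply: eq_bigr => k _.
  have kK := ltn_ord k.
  have hk : (K%:R - k%:R : RR) != 0 by rewrite subr_eq0 eqr_nat gtn_eqF.
  rewrite /L hgm -/sK -natr1.
  by field; rewrite hk !gt_eqF.
rewrite eS sumr_const card_ord.
have eL0 : D2 / (2 * L 0%N) = D2 / (c * sK).
  by rewrite /L subr0 eK; field; rewrite !gt_eqF.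
rewrite eL0.
have e3 : 2 * Gb ^+ 2 * (2 * c / (K%:R * sK) *+ K) = 4 * (c * Gb ^+ 2 / sK).
  by rewrite -[_ *+ K]mulr_natr; field; rewrite !gt_eqF.
have e4 : 4 * (D2 / c + c * Gb ^+ 2) / sK = 4 * (D2 / (c * sK)) + 4 * (c * Gb ^+ 2 / sK).
  by field; rewrite !gt_eqF.
rewrite e3 e4.
have : 0 <= D2 / (c * sK) by rewrite divr_ge0 // mulr_ge0 // ltW.
lra.
Qed.
Lemma main_gen n d (f : 'I_n -> vec d -> RR) (g : 'I_n -> vec d -> vec d)
    (psi : vec d -> \bar RR) (G : 'I_n -> RR) (xstar x1 : vec d) (K : nat)
    (sigma : nat -> {perm 'I_n}) (etaf : nat -> RR) (x : nat -> vec d) (Bd : RR) :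
  (0 < n)%N ->
  (forall i, convex_fun (f i)) ->
  (forall i x, subgrad (f i) x (g i x)) ->
  (forall i, 0 < G i) ->
  (forall i x v, subgrad (f i) x v -> enorm v <= G i) ->
  proper_ext psi -> convex_ext psi ->
  (Fobj f psi xstar \is a fin_num) ->
  (0 < K)%N ->
  (forall k, (k < K)%N -> 0 < etaf k.+1) ->
  prox_shuffling_run g psi K etaf sigma x1 x ->
  dot (x1 - xstar) (x1 - xstar) / (2 * \sum_(0 <= j < K) gmf n etaf j)
     + 2 * ((n%:R)^-1 * \sum_(i < n) G i) ^+ 2 *
       \sum_(k < K) (gmf n etaf k ^+ 2 / \sum_(k <= j < K) gmf n etaf j) <= Bd ->
  (Fobj f psi (x K.+1) - Fobj f psi xstar <= Bd%:E)%E.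
Proof.
move=> n0 cf hsub G0 hGb pr cv fin K0 epos hrun hB.
apply: (le_trans (general_bound n0 cf hsub G0 hGb pr cv fin K0 epos hrun)).
by rewrite lee_fin.
Qed.

Theorem theorem4p3 :
  exists C : RR, 0 < C /\
  forall (n d : nat) (f : 'I_n -> vec d -> RR) (g : 'I_n -> vec d -> vec d)
    (psi : vec d -> \bar RR) (G : 'I_n -> RR) (xstar x1 : vec d) (K : nat)
    (sigma : nat -> {perm 'I_n}),
    (0 < n)%N ->
    (forall i, convex_fun (f i)) ->
    (forall i x, subgrad (f i) x (g i x)) ->
    (forall i, 0 < G i) ->
    (forall i x v, subgrad (f i) x v -> enorm v <= G i) ->
    proper_ext psi -> closed_ext psi -> convex_ext psi ->
    (Fobj f psi xstar \is a fin_num) ->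
    (forall x, (Fobj f psi xstar <= Fobj f psi x)%E) ->
    (psi x1 < +oo)%E ->
    (2 <= K)%N ->
    let D := enorm (xstar - x1) in
    let Gbar := (n%:R)^-1 * \sum_(i < n) G i in
    forall eta : RR, 0 < eta ->
    (* (i) eta_k = eta / sqrt k *)
    (forall x : nat -> vec d,
      prox_shuffling_run g psi K (fun k => eta / Num.sqrt (k%:R)) sigma x1 x ->
      (Fobj f psi (x K.+1) - Fobj f psi xstar
        <= (C * (D ^+ 2 / (n%:R * eta) + n%:R * eta * Gbar ^+ 2 * (1 + ln (K%:R)))
              / Num.sqrt (K%:R))%:E)%E) /\
    (* (ii) eta_k = eta / sqrt K *)
    (forall x : nat -> vec d,
      prox_shuffling_run g psi K (fun k => eta / Num.sqrt (K%:R)) sigma x1 x ->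
      (Fobj f psi (x K.+1) - Fobj f psi xstar
        <= (C * (D ^+ 2 / (n%:R * eta) + n%:R * eta * Gbar ^+ 2 * (1 + ln (K%:R)))
              / Num.sqrt (K%:R))%:E)%E) /\
    (* (iii) eta_k = eta (K - k + 1) / K^{3/2} *)
    (forall x : nat -> vec d,
      prox_shuffling_run g psi K
        (fun k => eta * ((K%:R - k%:R + 1) / (K%:R * Num.sqrt (K%:R)))) sigma x1 x ->
      (Fobj f psi (x K.+1) - Fobj f psi xstar
        <= (C * (D ^+ 2 / (n%:R * eta) + n%:R * eta * Gbar ^+ 2)
              / Num.sqrt (K%:R))%:E)%E) /\
    (* in particular: eta = D / (n Gbar) in (iii) *)
    (0 < D ->
     forall x : nat -> vec d,
      prox_shuffling_run g psi K
        (fun k => D / (n%:R * Gbar) * ((K%:R - k%:R + 1) / (K%:R * Num.sqrt (K%:R))))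
        sigma x1 x ->
      (Fobj f psi (x K.+1) - Fobj f psi xstar
        <= (2 * C * (Gbar * D / Num.sqrt (K%:R)))%:E)%E).
Proof.
exists 4; split; first by [].
move=> n d f g psi G xstar x1 K sigma n0 cf hsub G0 hGb pr cl cv fin opt dom1 K2 D Gbar.
have K0 : (0 < K)%N by apply: leq_trans K2.
have sK0 : 0 < Num.sqrt (K%:R : RR) by rewrite sqrtr_gt0 ltr0n.
have nR0 : (0 : RR) < n%:R by rewrite ltr0n.
have eD : D ^+ 2 = dot (x1 - xstar) (x1 - xstar) by rewrite /D enormB enorm_sq.
have D20 : 0 <= dot (x1 - xstar) (x1 - xstar) by exact: dot_ge0.
have part3 : forall eta : RR, 0 < eta -> forall x : nat -> vec d,
      prox_shuffling_run g psi K
        (fun k => eta * ((K%:R - k%:R + 1) / (K%:R * Num.sqrt (K%:R)))) sigma x1 x ->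
      (Fobj f psi (x K.+1) - Fobj f psi xstar
        <= (4 * (D ^+ 2 / (n%:R * eta) + n%:R * eta * Gbar ^+ 2)
              / Num.sqrt (K%:R))%:E)%E.
  move=> eta e0 x hrun.
  apply: (main_gen n0 cf hsub G0 hGb pr cv fin K0 _ hrun).
    move=> k kK; apply: mulr_gt0 => //; apply: divr_gt0; last by rewrite mulr_gt0 // ltr0n.
    have -> : K%:R - (k.+1)%:R + 1 = K%:R - k%:R :> RR by rewrite -natr1; ring.
    by rewrite subr_gt0 ltr_nat.
  rewrite eD; apply: sched_iii => //; first by rewrite mulr_gt0.
  by move=> k; rewrite /gmf mulrA.
move=> eta e0; split; [|split; [|split]].
- move=> x hrun.
  apply: (main_gen n0 cf hsub G0 hGb pr cv fin K0 _ hrun).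
    by move=> k kK; rewrite divr_gt0 // sqrtr_gt0 ltr0n.
  rewrite eD; apply: sched_i => //; first by rewrite mulr_gt0.
  by move=> k; rewrite /gmf mulrA.
- move=> x hrun.
  apply: (main_gen n0 cf hsub G0 hGb pr cv fin K0 _ hrun).
    by move=> k kK; rewrite divr_gt0.
  rewrite eD; apply: sched_ii => //; first by rewrite mulr_gt0.
  by move=> k; rewrite /gmf mulrA.
- exact: part3.
- move=> D0 x hrun.
  have Gb0 : 0 < Gbar.
    rewrite /Gbar mulr_gt0 ?invr_gt0 //.
    rewrite (bigD1 (Ordinal n0)) //= ltr_pwDl ?G0 //.
    by rewrite sumr_ge0 // => i _; exact: ltW.
  have e1 : 0 < D / (n%:R * Gbar) by rewrite divr_gt0 // mulr_gt0.
  apply: (le_trans (part3 _ e1 x hrun)).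
  rewrite lee_fin le_eqVlt; apply/orP; left; apply/eqP.
  by field; rewrite !gt_eqF.
Qed.
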